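(* Let $S\in\mathbb{R}^{n\times n}$, $n=2m$, be nonsingular and skew-symmetric with eigenvalues $\pm\mathrm{i}\sigma_j$, where $\sigma_1=\cdots=\sigma_r>\sigma_{r+1}\ge\cdots\ge\sigma_m>0$ for some $1\le r<m$, and let $u_j,v_j$ be as follows: $\{u_1,\ldots,u_m,v_1,\ldots,v_m\}$ is an orthonormal basis of $\mathbb{R}^n$ with $Sv_j=\sigma_ju_j$, $Su_j=-\sigma_jv_j$. Let $q_0=2\sum_{i=1}^m(\alpha_{i,1}u_i-\alpha_{i,2}v_i)$ be a real unit vector with $\sum_{i=1}^r(\alpha_{i,1}^2+\alpha_{i,2}^2)>0$, and let $q_{2k+1}=Sq_{2k}/\|Sq_{2k}\|$, $q_{2k+2}=-Sq_{2k+1}/\|Sq_{2k+1}\|$. Let $x_e$ and $x_o$ be the unit vectors obtained by normalizing $\sum_{i=1}^r(\alpha_{i,1}u_i-\alpha_{i,2}v_i)$ and $\sum_{i=1}^r(-\alpha_{i,1}v_i-\alpha_{i,2}u_i)$, respectively. Then $q_{2k}\to x_e$ and $q_{2k-1}\to x_o$ as $k\to\infty$; $x_o\perp x_e$; $Sx_o=-\sigma_1x_e$ and $Sx_e=\sigma_1x_o$, so $\frac{\sqrt2}{2}(x_o\pm\mathrm{i}x_e)$ are unit eigenvectors of $S$ for $\pm\mathrm{i}\sigma_1$. Moreover, $|\tan\angle(q_{2k},x_e)|\le(\sigma_{r+1}/\sigma_1)^{2k}|\tan\angle(q_0,x_e)|$ and $|\tan\angle(q_{2k-1},x_o)|\le(\sigma_{r+1}/\sigma_1)^{2(k-1)}|\tan\angle(Sq_0,x_o)|$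 for all $k\ge1$.
   Context: $\|\cdot\|$ is the Euclidean norm; $\angle(x,y)$ is the acute angle between real vectors $x,y$, with $\cos\angle(x,y)=|x^Ty|/(\|x\|\|y\|)$. *)

(* Defs.v *)
From HB Require Import structures.
From mathcomp Require Import all_boot all_order all_algebra.
From mathcomp Require Import all_classical all_reals all_analysis.
From mathcomp Require Import complex.
Set Implicit Arguments. Unset Strict Implicit. Unset Printing Implicit Defensive.
Import Order.TTheory GRing.Theory Num.Theory.
Local Open Scope ring_scope.

Definition dotv (R : realType) (n : nat) (x y : 'cV[R]_n) : R := (x^T *m y) 0 0.
Definition enorm (R : realType) (n : nat) (x : 'cV[R]_n) : R := Num.sqrt (dotv x x).
Definition normalize (R : realType) (n : nat) (x : 'cV[R]_n) : 'cV[R]_n :=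
  (enorm x)^-1 *: x.

Definition angle (R : realType) (n : nat) (x y : 'cV[R]_n) : R :=
  acos (`|dotv x y| / (enorm x * enorm y)).

(* q_0 = q0, q_{2k+1} = S q_{2k}/||S q_{2k}||, q_{2k+2} = - S q_{2k+1}/||S q_{2k+1}|| *)
Fixpoint qseq (R : realType) (n : nat) (S : 'M[R]_n) (q0 : 'cV[R]_n) (k : nat)
  : 'cV[R]_n :=
  match k with
  | 0%N => q0
  | k'.+1 => ((-1) ^+ k' / enorm (S *m qseq S q0 k')) *: (S *m qseq S q0 k')
  end.

Definition cplxv (R : realType) (n : nat) (x y : 'cV[R]_n) : 'cV[R[i]]_n :=
  \col_j (x j 0 +i* y j 0)%C.
Definition cnorm2 (R : realType) (n : nat) (w : 'cV[R[i]]_n) : R[i] :=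
  \sum_j `|w j 0| ^+ 2.

(* Main.v *)
Require Import Defs.
From HB Require Import structures.
From mathcomp Require Import all_boot all_order all_algebra.
From mathcomp Require Import all_classical all_reals all_analysis.
From mathcomp Require Import complex.
From mathcomp Require Import ring lra.
Import Order.TTheory GRing.Theory Num.Theory numFieldNormedType.Exports.
Local Open Scope classical_set_scope.
Local Open Scope ring_scope.
Set Implicit Arguments. Unset Strict Implicit.
Section Gen.
Variables (R : realType) (n : nat).
Implicit Types (x y z : 'cV[R]_n) (a b c : R).

Lemma dotvE x y : dotv x y = \sum_j x j 0 * y j 0.
Proof. by rewrite /dotv !mxE; apply: eq_bigr => j _; rewrite mxE. Qed.

Lemma dotvC x y : dotv x y = dotv y x.
Proof. by rewrite !dotvE; apply: eq_bigr => j _; rewrite mulrC. Qed.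

Lemma dotvDl x y z : dotv (x + y) z = dotv x z + dotv y z.
Proof. by rewrite !dotvE -big_split; apply: eq_bigr => j _; rewrite mxE mulrDl. Qed.

Lemma dotvZl a x y : dotv (a *: x) y = a * dotv x y.
Proof. by rewrite !dotvE mulr_sumr; apply: eq_bigr => j _; rewrite mxE mulrA. Qed.

Lemma dotvNl x y : dotv (- x) y = - dotv x y.
Proof. by rewrite -scaleN1r dotvZl mulN1r. Qed.

Lemma dotvBl x y z : dotv (x - y) z = dotv x z - dotv y z.
Proof. by rewrite dotvDl dotvNl. Qed.

Lemma dotvDr x y z : dotv z (x + y) = dotv z x + dotv z y.
Proof. by rewrite !(dotvC z) dotvDl. Qed.
Lemma dotvZr a x y : dotv y (a *: x) = a * dotv y x.
Proof. by rewrite !(dotvC y) dotvZl. Qed.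
Lemma dotvBr x y z : dotv z (x - y) = dotv z x - dotv z y.
Proof. by rewrite !(dotvC z) dotvBl. Qed.

Lemma dotv_suml (I : finType) (P : pred I) (F : I -> 'cV[R]_n) y :
  dotv (\sum_(i | P i) F i) y = \sum_(i | P i) dotv (F i) y.
Proof.
elim/big_rec2: _ => [|i a' b' _ <-]; last by rewrite dotvDl.
by rewrite dotvE big1 // => j _; rewrite mxE mul0r.
Qed.

Lemma dotv_sumr (I : finType) (P : pred I) (F : I -> 'cV[R]_n) y :
  dotv y (\sum_(i | P i) F i) = \sum_(i | P i) dotv y (F i).
Proof. rewrite dotvC dotv_suml; apply: eq_bigr => i _; exact: dotvC. Qed.

Lemma dotv_ge0 x : 0 <= dotv x x.
Proof. by rewrite dotvE sumr_ge0 // => j _; rewrite -expr2 sqr_ge0. Qed.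

Lemma dotv_eq0 x : dotv x x = 0 -> x = 0.
Proof.
rewrite dotvE => /eqP; rewrite psumr_eq0 => [/allP H|j _]; last by rewrite -expr2 sqr_ge0.
apply/matrixP => i j; rewrite (ord1 j) mxE.
have := H i (mem_index_enum _); rewrite -expr2 sqrf_eq0 => /eqP //.
Qed.

Lemma enorm_ge0 x : 0 <= enorm x.
Proof. exact: sqrtr_ge0. Qed.

Lemma enorm_sqr x : enorm x ^+ 2 = dotv x x.
Proof. by rewrite /enorm sqr_sqrtr // dotv_ge0. Qed.

Lemma enormZ a x : enorm (a *: x) = `|a| * enorm x.
Proof. by rewrite /enorm dotvZl dotvZr mulrA -expr2 sqrtrM ?sqr_ge0 // sqrtr_sqr. Qed.

Lemma enorm_eq0 x : enorm x = 0 -> x = 0.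
Proof. by move=> H; apply: dotv_eq0; rewrite -enorm_sqr H expr0n. Qed.

Lemma normalizeZ a x : 0 < a -> normalize (a *: x) = normalize x.
Proof.
move=> a0; rewrite /normalize enormZ gtr0_norm // scalerA invfM mulrAC mulVf ?mul1r //.
by rewrite gt_eqF.
Qed.

Lemma normalizeN x : normalize (- x) = - normalize x.
Proof. by rewrite -scaleN1r /normalize enormZ normrN1 mul1r scalerA mulrN1 scaleNr. Qed.



Lemma enorm_normalize x : enorm x != 0 -> enorm (normalize x) = 1.
Proof.
move=> nz; rewrite /normalize enormZ ger0_norm ?invr_ge0 ?enorm_ge0 // mulVf //.
Qed.

Lemma angleZ a b x y : 0 < a -> 0 < b -> angle (a *: x) (b *: y) = angle x y.
Proof.
move=> a0 b0; rewrite /angle dotvZl dotvZr !enormZ !normrM (gtr0_norm a0) (gtr0_norm b0).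
congr acos; rewrite mulrA [a * enorm x * _]mulrACA invfM mulrACA mulfV ?mul1r //.
by rewrite mulf_neq0 // gt_eqF.
Qed.

Lemma enorm_sub_unit x y : enorm x = 1 -> enorm y = 1 ->
  enorm (x - y) ^+ 2 = 2 - 2 * dotv x y.
Proof.
move=> hx hy; rewrite enorm_sqr dotvBl !dotvBr -!enorm_sqr hx hy (dotvC y x).
by rewrite expr1n; ring.
Qed.

Lemma key_c (A B : R) : 0 < A -> 0 <= B ->
  let c := A / (Num.sqrt (A + B) * Num.sqrt A) in
  [/\ 0 < c, c <= 1, c ^+ 2 = A / (A + B) & 1 - c ^+ 2 = B / (A + B)].
Proof.
move=> A0 B0 c.
have AB0 : 0 < A + B by apply: ltr_wpDr.
have sAB : 0 < Num.sqrt (A + B) by rewrite sqrtr_gt0.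
have sA : 0 < Num.sqrt A by rewrite sqrtr_gt0.
have c0 : 0 < c by rewrite divr_gt0 // mulr_gt0.
have c2 : c ^+ 2 = A / (A + B).
  rewrite /c expr_div_n exprMn !sqr_sqrtr ?ltW //; field.
  by apply/andP; split; rewrite gt_eqF.
split => //; last by rewrite c2; field; rewrite gt_eqF.
rewrite -(ler_pXn2r (n := 2)) ?qualifE /= ?(ltW c0) // expr1n c2.
by rewrite ler_pdivrMr // mul1r lerDl.
Qed.

Lemma key_tan x y (A B : R) : 0 < A -> 0 <= B -> dotv x x = A + B -> dotv y y = A ->
  dotv x y = A -> tan (angle x y) = Num.sqrt (B / A).
Proof.
move=> A0 B0 Hxx Hyy Hxy.
rewrite /angle /enorm Hxx Hyy Hxy (ger0_norm (ltW A0)).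
move: (@key_c A B A0 B0) => /=.
set c := A / (Num.sqrt (A + B) * Num.sqrt A) => -[c0 c1 c2 c3].
have hc : c \in `[-1, 1] by rewrite in_itv /= c1 andbT (le_trans _ (ltW c0)) // lerN10.
rewrite /tan sin_acos; last by move: hc; rewrite in_itv.
rewrite acosK //.
apply/eqP; rewrite -(eqrXn2 (n := 2)) //; last first.
- by rewrite divr_ge0 ?sqrtr_ge0 // ltW.
have AB0 : 0 < A + B by apply: ltr_wpDr.
rewrite expr_div_n c3 c2 !sqr_sqrtr ?divr_ge0 // ?(ltW A0) ?(ltW AB0) //.
apply/eqP; field.
by apply/andP; split; rewrite gt_eqF // ltr_wpDr.
Qed.

Lemma key_conv x y (A B : R) : 0 < A -> 0 <= B -> dotv x x = A + B -> dotv y y = A ->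
  dotv x y = A -> enorm (normalize x - normalize y) <= Num.sqrt 2 * Num.sqrt (B / A).
Proof.
move=> A0 B0 Hxx Hyy Hxy.
have AB0 : 0 < A + B by apply: ltr_wpDr.
have ex : enorm x = Num.sqrt (A + B) by rewrite /enorm Hxx.
have ey : enorm y = Num.sqrt A by rewrite /enorm Hyy.
have nx : enorm x != 0 by rewrite ex sqrtr_eq0 -ltNge.
have ny : enorm y != 0 by rewrite ey sqrtr_eq0 -ltNge.
move: (@key_c A B A0 B0) => /=.
set c := A / (Num.sqrt (A + B) * Num.sqrt A) => -[c0 c1 c2 c3].
have dc : dotv (normalize x) (normalize y) = c.
  rewrite /normalize dotvZl dotvZr Hxy ex ey /c invfM; ring.
rewrite -(ler_pXn2r (n := 2)) ?qualifE /= ?enorm_ge0 ?mulr_ge0 ?sqrtr_ge0 //.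
rewrite enorm_sub_unit ?enorm_normalize // dc exprMn !sqr_sqrtr ?divr_ge0 // ?(ltW A0) //.
have cc : c ^+ 2 <= c by rewrite expr2 ger_pMl.
have h1 : B / (A + B) <= B / A.
  by rewrite ler_wpM2l // lef_pV2 ?posrE // lerDl.
rewrite -c3 in h1.
have h2 : 2 - 2 * c <= 2 * (1 - c ^+ 2) by lra.
apply: (le_trans h2); rewrite ler_pM2l //.
Qed.

End Gen.
Arguments dotvE {R n}.
Arguments dotvC {R n}.
Arguments dotvDl {R n}.
Arguments dotvZl {R n}.
Arguments dotvNl {R n}.
Arguments dotvBl {R n}.
Arguments dotvDr {R n}.
Arguments dotvZr {R n}.
Arguments dotvBr {R n}.
Arguments dotv_suml {R n}.
Arguments dotv_sumr {R n}.
Arguments dotv_ge0 {R n}.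
Arguments dotv_eq0 {R n}.
Arguments enorm_ge0 {R n}.
Arguments enorm_sqr {R n}.
Arguments enormZ {R n}.
Arguments enorm_eq0 {R n}.
Arguments normalizeZ {R n}.
Arguments normalizeN {R n}.
Arguments enorm_normalize {R n}.
Arguments angleZ {R n}.
Arguments enorm_sub_unit {R n}.
Arguments key_tan {R n}.
Arguments key_conv {R n}.

Section Spec.
Variables (R : realType) (m n r : nat) (S : 'M[R]_n) (sigma : nat -> R)
  (u v : nat -> 'cV[R]_n).
Hypothesis Hrm : (r < m)%N.
Hypothesis Hsig_eq : forall j, (j < r)%N -> sigma j = sigma 0%N.
Hypothesis Hsig_mono : forall i j, (i <= j)%N -> (j < m)%N -> sigma j <= sigma i.
Hypothesis Hsig_pos : forall j, (j < m)%N -> 0 < sigma j.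
Hypothesis Huu : forall i j, (i < m)%N -> (j < m)%N -> dotv (u i) (u j) = (i == j)%:R.
Hypothesis Hvv : forall i j, (i < m)%N -> (j < m)%N -> dotv (v i) (v j) = (i == j)%:R.
Hypothesis Huv : forall i j, (i < m)%N -> (j < m)%N -> dotv (u i) (v j) = 0.
Hypothesis HSv : forall j, (j < m)%N -> S *m v j = sigma j *: u j.
Hypothesis HSu : forall j, (j < m)%N -> S *m u j = - (sigma j *: v j).

Implicit Types (f g : nat -> R).

Definition E f g : 'cV[R]_n := \sum_(i < m) (f i *: u i - g i *: v i).
Definition rs f : nat -> R := fun i => if (i < r)%N then f i else 0.
Definition Aof f g : R := \sum_(i < m | (i < r)%N) (f i ^+ 2 + g i ^+ 2).
Definition Bof f g : R := \sum_(i < m | ~~ (i < r)%N) (f i ^+ 2 + g i ^+ 2).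
Definition P k f : nat -> R := fun i => sigma i ^+ k * f i.

Lemma sum_delta (F : 'I_m -> R) (i : 'I_m) :
  \sum_(j < m) ((i == j :> nat)%:R * F j) = F i.
Proof.
rewrite (bigD1 i) //= eqxx mul1r big1 ?addr0 // => j ji.
have -> : (i == j :> nat) = false by apply/negbTE; rewrite eq_sym.
by rewrite mul0r.
Qed.

Lemma dotE f g f' g' :
  dotv (E f g) (E f' g') = \sum_(i < m) (f i * f' i + g i * g' i).
Proof.
rewrite /E dotv_suml; apply: eq_bigr => i _; rewrite dotv_sumr.
rewrite -[RHS](sum_delta (fun j => f i * f' j + g i * g' j)); apply: eq_bigr => j _.
rewrite dotvBl !dotvBr !dotvZl !dotvZr Huu // Hvv // Huv // (dotvC (v i)) Huv //.
ring.
Qed.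

Lemma SE f g : S *m E f g = E (fun i => - (sigma i * g i)) (fun i => sigma i * f i).
Proof.
rewrite /E mulmx_sumr; apply: eq_bigr => i _.
rewrite mulmxBr -!scalemxAr HSu // HSv // scalerN !scalerA scaleNr.
by rewrite addrC [g i * _]mulrC [f i * _]mulrC.
Qed.

Lemma E_ext f g f' g' : (forall i, (i < m)%N -> f i = f' i) ->
  (forall i, (i < m)%N -> g i = g' i) -> E f g = E f' g'.
Proof. by move=> hf hg; apply: eq_bigr => i _; rewrite hf // hg. Qed.

Lemma EZ c f g : E (fun i => c * f i) (fun i => c * g i) = c *: E f g.
Proof.
by rewrite /E scaler_sumr; apply: eq_bigr => i _; rewrite scalerBr !scalerA.
Qed.

Lemma Er f g : \sum_(i < m | (i < r)%N) (f i *: u i - g i *: v i) = E (rs f) (rs g).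
Proof.
rewrite big_mkcond; apply: eq_bigr => i _; rewrite /rs.
by case: ifP => // _; rewrite !scale0r subr0.
Qed.

Lemma dot_full f g : dotv (E f g) (E f g) = Aof f g + Bof f g.
Proof.
rewrite dotE /Aof /Bof (bigID (fun i : 'I_m => (i < r)%N)) /=.
by congr (_ + _).
Qed.

Lemma dot_mix f g : dotv (E f g) (E (rs f) (rs g)) = Aof f g.
Proof.
rewrite dotE /Aof [RHS]big_mkcond; apply: eq_bigr => i _; rewrite /rs.
by case: ifP => _; rewrite ?mulr0 ?addr0 // !expr2.
Qed.

Lemma dot_rr f g : dotv (E (rs f) (rs g)) (E (rs f) (rs g)) = Aof f g.
Proof.
rewrite dotE /Aof [RHS]big_mkcond; apply: eq_bigr => i _; rewrite /rs.
by case: ifP => _; rewrite ?mulr0 ?addr0 // !expr2.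
Qed.

Lemma Bof_ge0 f g : 0 <= Bof f g.
Proof. by apply: sumr_ge0 => i _; rewrite addr_ge0 // sqr_ge0. Qed.

Lemma sig0 : 0 < sigma 0%N.
Proof. by apply: Hsig_pos; apply: leq_ltn_trans Hrm. Qed.

Lemma AofP k f g : Aof (P k f) (P k g) = (sigma 0%N ^+ k) ^+ 2 * Aof f g.
Proof.
rewrite /Aof mulr_sumr; apply: eq_bigr => i hi.
by rewrite /P Hsig_eq // !exprMn mulrDr.
Qed.

Lemma BofP k f g : Bof (P k f) (P k g) <= (sigma r ^+ k) ^+ 2 * Bof f g.
Proof.
rewrite /Bof mulr_sumr; apply: ler_sum => i hi.
rewrite /P !exprMn -mulrDr; apply: ler_wpM2r; first by rewrite addr_ge0 // sqr_ge0.
have s0 : 0 <= sigma i by apply/ltW/Hsig_pos.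
have sr : 0 <= sigma r by apply/ltW/Hsig_pos.
apply: lerXn2r; rewrite ?qualifE /= ?exprn_ge0 //.
apply: lerXn2r; rewrite ?qualifE /= //.
by apply: Hsig_mono => //; rewrite leqNgt.
Qed.

Lemma Ers_P k f g : E (rs (P k f)) (rs (P k g)) = sigma 0%N ^+ k *: E (rs f) (rs g).
Proof.
rewrite -EZ; apply: E_ext => i _; rewrite /rs /P; case: ifP => h;
  by rewrite ?mulr0 // Hsig_eq.
Qed.

Lemma Aof_pos_P k f g : 0 < Aof f g -> 0 < Aof (P k f) (P k g).
Proof. by move=> A0; rewrite AofP mulr_gt0 // !exprn_gt0 // sig0. Qed.

Lemma enormE_pos f g : 0 < Aof f g -> 0 < enorm (E f g).
Proof. by move=> A0; rewrite /enorm dot_full sqrtr_gt0 ltr_wpDr // Bof_ge0. Qed.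

Lemma enormEr_pos f g : 0 < Aof f g -> 0 < enorm (E (rs f) (rs g)).
Proof. by move=> A0; rewrite /enorm dot_rr sqrtr_gt0. Qed.

Lemma tanE0 f g a b : 0 < Aof f g -> 0 < a -> 0 < b ->
  tan (angle (a *: E f g) (b *: E (rs f) (rs g))) = Num.sqrt (Bof f g / Aof f g).
Proof.
move=> A0 a0 b0; rewrite angleZ //; apply: key_tan => //.
- exact: Bof_ge0.
- exact: dot_full.
- exact: dot_rr.
- exact: dot_mix.
Qed.

Lemma tanEk k f g a b : 0 < Aof f g -> 0 < a -> 0 < b ->
  tan (angle (a *: E (P k f) (P k g)) (b *: E (rs f) (rs g)))
  = Num.sqrt (Bof (P k f) (P k g) / Aof (P k f) (P k g)).
Proof.
move=> A0 a0 b0.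
have s0 := sig0.
have e : E (rs f) (rs g) = (sigma 0%N ^+ k)^-1 *: E (rs (P k f)) (rs (P k g)).
  by rewrite Ers_P scalerA mulVf ?scale1r // expf_neq0 // gt_eqF.
rewrite e scalerA tanE0 // ?Aof_pos_P // mulr_gt0 // invr_gt0 exprn_gt0 //.
Qed.

Lemma ratio_le k f g : 0 < Aof f g ->
  Num.sqrt (Bof (P k f) (P k g) / Aof (P k f) (P k g))
  <= (sigma r / sigma 0%N) ^+ k * Num.sqrt (Bof f g / Aof f g).
Proof.
move=> A0; have s0 := sig0; have sr : 0 < sigma r by apply: Hsig_pos.
have rk : 0 <= (sigma r / sigma 0%N) ^+ k by rewrite exprn_ge0 // divr_ge0 // ltW.
have -> : (sigma r / sigma 0%N) ^+ k = Num.sqrt (((sigma r / sigma 0%N) ^+ k) ^+ 2).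
  by rewrite sqrtr_sqr ger0_norm.
rewrite -sqrtrM ?sqr_ge0 // ler_sqrt; last first.
  by rewrite mulr_ge0 ?sqr_ge0 // divr_ge0 ?Bof_ge0 // ltW.
have -> : ((sigma r / sigma 0%N) ^+ k) ^+ 2 * (Bof f g / Aof f g)
   = ((sigma r ^+ k) ^+ 2 * Bof f g) / ((sigma 0%N ^+ k) ^+ 2 * Aof f g).
  by rewrite expr_div_n expr_div_n; field; rewrite !expf_neq0 // gt_eqF.
rewrite AofP ler_pM2r ?BofP // invr_gt0 mulr_gt0 // !exprn_gt0 //.
Qed.

Lemma conv_k k f g : 0 < Aof f g ->
  enorm (normalize (E (P k f) (P k g)) - normalize (E (rs f) (rs g)))
  <= Num.sqrt 2 * Num.sqrt (Bof (P k f) (P k g) / Aof (P k f) (P k g)).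
Proof.
move=> A0.
have e : normalize (E (rs f) (rs g)) = normalize (E (rs (P k f)) (rs (P k g))).
  by rewrite Ers_P normalizeZ // exprn_gt0 // sig0.
rewrite e; apply: key_conv; first exact: Aof_pos_P.
- exact: Bof_ge0.
- exact: dot_full.
- exact: dot_rr.
- exact: dot_mix.
Qed.

Lemma normalize_S x : normalize (S *m normalize x) = normalize (S *m x).
Proof.
have [/enorm_eq0 ->|nz] := eqVneq (enorm x) 0; first by rewrite /normalize !scaler0.
rewrite [normalize x]/normalize -scalemxAr normalizeZ // invr_gt0 lt_def nz enorm_ge0 //.
Qed.

Lemma qseq_form (a1 a2 : nat -> R) (q0 : 'cV_n) :
  q0 = normalize (E a1 a2) ->
  forall k, qseq S q0 k.*2 = normalize (E (P k.*2 a1) (P k.*2 a2)) /\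
            qseq S q0 (k.*2).+1 = normalize (E (P k.*2 (P 1 (fun i => - a2 i)))
                                               (P k.*2 (P 1 a1))).
Proof.
move=> hq0.
have SEo k : S *m E (P k.*2 a1) (P k.*2 a2)
           = E (P k.*2 (P 1 (fun i => - a2 i))) (P k.*2 (P 1 a1)).
  by rewrite SE; apply: E_ext => i _; rewrite /P; ring.
have SEe k : S *m E (P k.*2 (P 1 (fun i => - a2 i))) (P k.*2 (P 1 a1))
           = - E (P (k.+1).*2 a1) (P (k.+1).*2 a2).
  rewrite SE -scaleN1r -EZ; apply: E_ext => i _; rewrite /P doubleS !exprS; ring.
have odd_step k : qseq S q0 k.*2 = normalize (E (P k.*2 a1) (P k.*2 a2)) ->
    qseq S q0 (k.*2).+1 = normalize (E (P k.*2 (P 1 (fun i => - a2 i))) (P k.*2 (P 1 a1))).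
  move=> hk; rewrite [LHS]/= hk -signr_odd odd_double expr0 mul1r.
  by rewrite -SEo -normalize_S.
suff hev k : qseq S q0 k.*2 = normalize (E (P k.*2 a1) (P k.*2 a2)).
  by move=> k; split; [exact: hev | apply: odd_step; exact: hev].
elim: k => [|k IH].
  rewrite /= hq0; congr normalize; apply: E_ext => i _; rewrite /P expr0 mul1r //.
rewrite doubleS.
change (qseq S q0 (k.*2).+2) with
  (((-1) ^+ (k.*2).+1 / enorm (S *m qseq S q0 (k.*2).+1)) *: (S *m qseq S q0 (k.*2).+1)).
rewrite (odd_step _ IH) -signr_odd /= odd_double /= expr1.
rewrite mulNr mul1r scaleNr.
change (- normalize (S *m normalize (E (P k.*2 (P 1 (fun i => - a2 i))) (P k.*2 (P 1 a1))))
  = normalize (E (P k.+1.*2 a1) (P k.+1.*2 a2))).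
by rewrite normalize_S SEe normalizeN opprK.
Qed.

End Spec.

Section Cplx.
Variables (R : realType) (n : nat).
Local Open Scope complex_scope.

Lemma sumC (I : finType) (F G : I -> R) :
  \sum_i (F i +i* G i) = (\sum_i F i) +i* (\sum_i G i).
Proof. by elim/big_rec3: _ => // i a b c _ ->. Qed.

Lemma cplxv_mul (S : 'M[R]_n) x y :
  map_mx (fun a => a%:C) S *m cplxv x y = cplxv (S *m x) (S *m y).
Proof.
apply/matrixP => j k; rewrite !mxE.
rewrite (eq_bigr (fun l => (S j l * x l k) +i* (S j l * y l k))); last first.
  move=> l _; rewrite !mxE (ord1 k) /=.
  by rewrite /real_complex_def; simpc; congr (_ +i* _); ring.
by rewrite sumC (ord1 k).
Qed.


Lemma eig_cplx (S : 'M[R]_n) (x y : 'cV[R]_n) (s : R) :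
  S *m x = - (s *: y) -> S *m y = s *: x -> enorm x = 1 -> enorm y = 1 ->
  forall b : bool,
    let w := ((Num.sqrt 2 / 2)%:C)%C *: cplxv x ((-1) ^+ b *: y) in
    map_mx (fun a => (a%:C)%C) S *m w = ((-1) ^+ b * 'i%C * (s%:C)%C) *: w
    /\ cnorm2 w = 1.
Proof.
move=> Sx Sy nx ny b w; split.
  rewrite /w -scalemxAr cplxv_mul -scalemxAr Sx Sy scalerA.
  apply/matrixP => j k; rewrite !mxE.
  clear w; case: b; rewrite /= ?expr1 ?expr0 /real_complex_def; simpc;
    by congr (_ +i* _); ring.
rewrite /w /cnorm2.
have c2 : (Num.sqrt 2 / 2 : R) ^+ 2 = 2^-1.
  by rewrite expr_div_n sqr_sqrtr // ; field.
rewrite (eq_bigr (fun j => ((Num.sqrt 2 / 2) ^+ 2 * (x j 0 ^+ 2 + y j 0 ^+ 2)) +i* 0)).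
  rewrite sumC big1_eq -mulr_sumr big_split /=.
  have dx : dotv x x = 1 by rewrite -enorm_sqr nx expr1n.
  have dy : dotv y y = 1 by rewrite -enorm_sqr ny expr1n.
  rewrite dotvE in dx; rewrite dotvE in dy.
  have -> : \sum_(i < n) x i 0 ^+ 2 = 1 by rewrite -dx; apply: eq_bigr => i _; rewrite expr2.
  have -> : \sum_(i < n) y i 0 ^+ 2 = 1 by rewrite -dy; apply: eq_bigr => i _; rewrite expr2.
  rewrite c2; apply/eqP; rewrite eq_complex /= eqxx andbT.
  by apply/eqP; field.
move=> j _; rewrite !mxE normc_def /real_complex_def; simpc => /=.
rewrite expr2; simpc; rewrite /=; congr (_ +i* _).
rewrite -expr2 sqr_sqrtr; last by rewrite addr_ge0 // sqr_ge0.
by case: (b); rewrite ?expr0 ?expr1; ring.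
Qed.
End Cplx.

Unset Implicit Arguments.
Theorem mainTheorem6 (R : realType) (m n r : nat) (S : 'M[R]_n)
  (sigma alpha1 alpha2 : nat -> R) (u v : nat -> 'cV[R]_n)
  (Hn : n = (2 * m)%N)
  (Hskew : S^T = - S) (Hnonsing : S \in unitmx)
  (Heig : char_poly S = \prod_(j < m) ('X^2 + (sigma j ^+ 2)%:P))
  (Hr1 : (1 <= r)%N) (Hrm : (r < m)%N)
  (Hsig_eq : forall j, (j < r)%N -> sigma j = sigma 0%N)
  (Hsig_gap : sigma r < sigma 0%N)
  (Hsig_mono : forall i j, (i <= j)%N -> (j < m)%N -> sigma j <= sigma i)
  (Hsig_pos : forall j, (j < m)%N -> 0 < sigma j)
  (Huu : forall i j, (i < m)%N -> (j < m)%N -> dotv (u i) (u j) = (i == j)%:R)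
  (Hvv : forall i j, (i < m)%N -> (j < m)%N -> dotv (v i) (v j) = (i == j)%:R)
  (Huv : forall i j, (i < m)%N -> (j < m)%N -> dotv (u i) (v j) = 0)
  (HSv : forall j, (j < m)%N -> S *m v j = sigma j *: u j)
  (HSu : forall j, (j < m)%N -> S *m u j = - (sigma j *: v j))
  (q0 : 'cV[R]_n)
  (Hq0 : q0 = 2 *: \sum_(i < m) (alpha1 i *: u i - alpha2 i *: v i))
  (Hq0unit : enorm q0 = 1)
  (Halpha : 0 < \sum_(i < m | (i < r)%N) (alpha1 i ^+ 2 + alpha2 i ^+ 2)) :
  let q := qseq S q0 in
  let xe := normalize (\sum_(i < m | (i < r)%N) (alpha1 i *: u i - alpha2 i *: v i)) in
  let xo := normalize (\sum_(i < m | (i < r)%N) (- (alpha1 i *: v i) - alpha2 i *: u i)) in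
  let rho := sigma r / sigma 0%N in
  [/\ (fun k => enorm (q k.*2 - xe)) @ \oo --> (0 : R)
        /\ (fun k => enorm (q k.*2.-1 - xo)) @ \oo --> (0 : R),
      dotv xo xe = 0,
      S *m xo = - (sigma 0%N *: xe) /\ S *m xe = sigma 0%N *: xo,
      (forall s : bool,
         let w := ((Num.sqrt 2 / 2)%:C)%C *: cplxv xo ((-1) ^+ s *: xe) in
         map_mx (fun a => (a%:C)%C) S *m w = ((-1) ^+ s * 'i%C * ((sigma 0%N)%:C)%C) *: w
         /\ cnorm2 w = 1) &
      forall k, (1 <= k)%N ->
        `|tan (angle (q k.*2) xe)| <= rho ^+ k.*2 * `|tan (angle q0 xe)|
        /\ `|tan (angle (q k.*2.-1) xo)|
             <= rho ^+ (k.-1).*2 * `|tan (angle (S *m q0) xo)|].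
Proof.
move=> q xe xo rho.
have s0 : 0 < sigma 0%N by apply: Hsig_pos; apply: leq_ltn_trans Hrm.
have sr : 0 < sigma r := Hsig_pos r Hrm.
pose EE := @E R m n u v.
pose a2' := fun i => - alpha2 i.
pose h1 := @P R sigma 1 a2'.
pose h2 := @P R sigma 1 alpha1.
have q0N : q0 = normalize (EE alpha1 alpha2).
  rewrite -(@normalizeZ _ _ 2) // -Hq0 /normalize Hq0unit invr1 scale1r //.
have QF := qseq_form HSv HSu q0N.
have A0 : 0 < @Aof R m r alpha1 alpha2 := Halpha.
have AN : @Aof R m r a2' alpha1 = @Aof R m r alpha1 alpha2.
  by apply: eq_bigr => i _; rewrite /a2' sqrrN addrC.
have Ah : 0 < @Aof R m r h1 h2.
  by rewrite /h1 /h2 AofP // AN mulr_gt0 // exprn_gt0 // exprn_gt0.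
pose Y := EE (@rs R r alpha1) (@rs R r alpha2).
pose Z := EE (@rs R r a2') (@rs R r alpha1).
have xeE : xe = normalize Y by rewrite /xe Er.
have xoZ : xo = normalize Z.
  rewrite /xo (eq_bigr (fun i : 'I_m => a2' i *: u i - alpha1 i *: v i)) ?Er //.
  by move=> i _; rewrite /a2' scaleNr addrC.
have xoE : xo = normalize (EE (@rs R r h1) (@rs R r h2)).
  by rewrite xoZ /h1 /h2 /EE Ers_P // normalizeZ // expr1.
have Sq0 : S *m q0 = 2 *: EE h1 h2.
  rewrite Hq0 -scalemxAr /EE (SE HSv HSu); congr (_ *: _); apply: E_ext => i _;
  by rewrite /h1 /h2 /P /a2' expr1 // mulrN.
have rho0 : 0 < rho by rewrite divr_gt0.
have rho1 : rho < 1 by rewrite ltr_pdivrMr // mul1r.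
have tk := tanEk Hrm Hsig_eq Hsig_pos Huu Hvv Huv.
have t0 := tanE0 (r := r) Huu Hvv Huv.
have cvk := conv_k Hrm Hsig_eq Hsig_pos Huu Hvv Huv.
have rl := ratio_le Hrm Hsig_eq Hsig_mono Hsig_pos.
have epos f g : 0 < @Aof R m r f g -> 0 < (enorm (EE f g))^-1.
  by move=> hA; rewrite invr_gt0 (enormE_pos Huu Hvv Huv hA).
have erpos f g : 0 < @Aof R m r f g -> 0 < (enorm (EE (@rs R r f) (@rs R r g)))^-1.
  by move=> hA; rewrite invr_gt0 (enormEr_pos Huu Hvv Huv hA).
have Apk k f g : 0 < @Aof R m r f g -> 0 < @Aof R m r (@P R sigma k f) (@P R sigma k g).
  exact: (Aof_pos_P Hrm Hsig_eq Hsig_pos).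
have ey : enorm xe = 1.
  by rewrite xeE enorm_normalize // gt_eqF // (enormEr_pos Huu Hvv Huv A0).
have ez : enorm xo = 1.
  by rewrite xoZ enorm_normalize // gt_eqF // /Z (enormEr_pos Huu Hvv Huv) // AN.
have SZ : S *m Z = - (sigma 0%N *: Y).
  rewrite /Z /Y /EE (SE HSv HSu) -scaleNr -EZ; apply: E_ext => i _; rewrite /rs /a2';
    case: ifP => h; first [rewrite (Hsig_eq i h); ring | ring].
have SY : S *m Y = sigma 0%N *: Z.
  rewrite /Z /Y /EE (SE HSv HSu) -EZ; apply: E_ext => i _; rewrite /rs /a2';
    case: ifP => h; first [rewrite (Hsig_eq i h); ring | ring].
have nYZ : enorm Z = enorm Y by rewrite /enorm /Z /Y /EE !(dot_rr r Huu Hvv Huv) AN.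
have Sxo : S *m xo = - (sigma 0%N *: xe).
  by rewrite xoZ xeE /normalize -scalemxAr SZ nYZ scalerN !scalerA mulrC.
have Sxe : S *m xe = sigma 0%N *: xo.
  by rewrite xoZ xeE /normalize -scalemxAr SY nYZ !scalerA mulrC.
have cv0 C : (fun k => C * (rho ^+ 2) ^+ k) @ \oo --> (0:R).
  have h : `|rho ^+ 2| < 1 by rewrite ger0_norm ?exprn_ge0 ?(ltW rho0) // expr_lt1 // ltW.
  by have := cvgMl_tmp (a := C) (cvg_expr h); rewrite mulr0; apply.
have bev k : enorm (q k.*2 - xe) <=
    (Num.sqrt 2 * Num.sqrt (@Bof R m r alpha1 alpha2 / @Aof R m r alpha1 alpha2))
    * (rho ^+ 2) ^+ k.
  rewrite /q (QF k).1 xeE; apply: le_trans (cvk (k.*2) _ _ A0) _.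
  rewrite -mulrA ler_pM2l ?sqrtr_gt0 // -exprM mul2n [leRHS]mulrC; exact: rl.
have bod k : enorm (q (k.+1).*2.-1 - xo) <=
    (Num.sqrt 2 * Num.sqrt (@Bof R m r h1 h2 / @Aof R m r h1 h2))
    * (rho ^+ 2) ^+ k.
  rewrite /q doubleS -[(k.*2).+2.-1]/((k.*2).+1) (QF k).2 xoE; apply: le_trans (cvk (k.*2) _ _ Ah) _.
  rewrite -mulrA ler_pM2l ?sqrtr_gt0 // -exprM mul2n [leRHS]mulrC; exact: rl.
split.
- split.
  + apply: (squeeze_cvgr _ (cvg_cst (0:R)) (cv0 _)).
    by apply: nearW => k; rewrite enorm_ge0 /=; apply: bev.
  + rewrite -cvg_shiftS /=.
    apply: (squeeze_cvgr _ (cvg_cst (0:R)) (cv0 _)).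
    by apply: nearW => k; rewrite enorm_ge0 /=; apply: bod.
- rewrite xoZ xeE /normalize dotvZl dotvZr /Z /Y /EE (dotE Huu Hvv Huv).
  rewrite big1 ?mulr0 // => i _; rewrite /rs /a2'; case: ifP => _; ring.
- by split.
- by move=> b; apply: eig_cplx.
move=> k k1; split.
  rewrite /q (QF k).1 xeE /normalize tk //; last exact: erpos.
    rewrite (_ : q0 = 2 *: EE alpha1 alpha2) // t0 //; last exact: erpos.
    rewrite !ger0_norm ?sqrtr_ge0 //; exact: rl.
  exact: epos (Apk _ _ _ A0).
case: k k1 => // j _.
rewrite /q doubleS -[(j.*2).+2.-1]/((j.*2).+1) -[(j.+1).-1]/j (QF j).2 xoE /normalize tk //; last exact: erpos.
  rewrite Sq0 t0 //; last exact: erpos.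
  rewrite !ger0_norm ?sqrtr_ge0 //; exact: rl.
exact: epos (Apk _ _ _ Ah).
Qed.
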